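(* For any $q\in\mathbb N$, $0<\epsilon\le1$ and $\lambda>\mu_q^*>0$, there exist a multilinear polynomial $f$ with nonnegative coefficients of total power $q$ and independent $\{0,1\}$-valued random variables $X_1,\dots,X_m$ such that (i) $\mu_j(f,X)\le\epsilon^{q-j}\mu_q^*$ for all $0\le j\le q$; (ii) $\Pr[f(X)-\mathbb E[f(X)]\ge\lambda]\ge\exp\{-2\epsilon\}\left(\frac{\epsilon}{4q(\lambda/\mu_q^* )^{1/q}}\right)^{4q(\lambda/\mu_q^* )^{1/q}}$; (iii) $\Pr[f(X)-\mathbb E[f(X)]\ge\mu_q^*]\ge\exp\{-2\epsilon\}\left(\frac{\epsilon}{q+1}\right)^{q+1}$.
   Context: For a multilinear polynomial $f(x)=\sum_{h\in\mathcal H}w_h\prod_{v\in h}x_v$ with $w_h\ge0$ and independent $\{0,1\}$-valued random variables $X$, $\mu_r(f,X)=\max_{A\subseteq[m],|A|=r}\sum_{h\in\mathcal H,\,A\subseteq h}w_h\prod_{i\in h\setminus A}\mathbb E[X_i]$. *)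

(* Defs.v *)
From HB Require Import structures.
From mathcomp Require Import all_boot all_order all_algebra.
From mathcomp Require Import reals sequences exp.
Set Implicit Arguments. Unset Strict Implicit. Unset Printing Implicit Defensive.
Import Order.TTheory GRing.Theory Num.Theory.
Local Open Scope ring_scope.

(* A multilinear polynomial in variables x_0..x_{m-1} with coefficients
   w : {set 'I_m} -> R  (f(x) = \sum_h w h * \prod_{v in h} x_v);
   the hyperedge set H is the support of w.
   Independent {0,1}-valued random variables X_0..X_{m-1} with
   P[X_i = 1] = p i; their joint law is the product Bernoulli law on
   outcomes x : {ffun 'I_m -> bool}. *)

Section Defs.
Variables (R : realType) (m : nat).
Implicit Types (w : {set 'I_m} -> R) (p : 'I_m -> R) (x : {ffun 'I_m -> bool}).

Definition is_prob_vec p := forall i, 0 <= p i <= 1.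

Definition nonneg_coeffs w := forall h, 0 <= w h.

Definition has_total_power w (q : nat) :=
  (forall h, w h != 0 -> (#|h| <= q)%N) /\ (exists h, w h != 0 /\ #|h| = q).

Definition poly_eval w x : R := \sum_(h : {set 'I_m}) w h * \prod_(v in h) (x v)%:R.

Definition outcome_prob p x : R := \prod_(i : 'I_m) (if x i then p i else 1 - p i).

Definition Expect p (F : {ffun 'I_m -> bool} -> R) : R :=
  \sum_(x : {ffun 'I_m -> bool}) outcome_prob p x * F x.

Definition Prob p (E : pred {ffun 'I_m -> bool}) : R :=
  \sum_(x : {ffun 'I_m -> bool} | E x) outcome_prob p x.

(* mu_r(f,X) = max_{|A| = r} \sum_{h \supseteq A} w_h \prod_{i in h \ A} E[X_i]
   (the maximum of an empty family, i.e. r > m, is taken to be 0;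
    all the quantities are nonnegative) *)
Definition mu_r w p (r : nat) : R :=
  \big[Num.max/0]_(A : {set 'I_m} | #|A| == r)
     \sum_(h : {set 'I_m} | A \subset h) w h * \prod_(i in h :\: A) p i.

End Defs.

(* Main.v *)
Require Import Defs.
From HB Require Import structures.
From mathcomp Require Import all_boot all_order all_algebra.
From mathcomp Require Import reals sequences exp.
From mathcomp Require Import lra.
Import Order.TTheory GRing.Theory Num.Theory.
Local Open Scope ring_scope.

Lemma bin_le_exp (n m : nat) : ('C(n, m) <= n ^ m)%N.
Proof.
apply: leq_trans (_ : 'C(n, m) * m`! <= _)%N.
  by rewrite leq_pmulr ?fact_gt0.
rewrite bin_ffact ffact_prod.
have -> : (n ^ m = \prod_(i < m) n)%N by rewrite prod_nat_const card_ord.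
by apply: leq_prod => i _; apply: leq_subr.
Qed.

Lemma bin_lb (R : realType) (k r : nat) : (r <= k)%N ->
  (k%:R / r%:R) ^+ r <= ('C(k, r))%:R :> R.
Proof.
move=> rk; case: r rk => [|r] rk; first by rewrite expr0 bin0.
have P0 : 0 < (\prod_(i < r.+1) (r.+1 - i)%N%:R : R).
  apply: prodr_gt0 => i _; rewrite ltr0n subn_gt0; exact: ltn_ord.
rewrite -(ler_pM2r P0) -natr_prod -ffact_prod ffactnn -natrM bin_ffact ffact_prod.
rewrite natr_prod.
have -> : (k%:R / r.+1%:R) ^+ r.+1 = \prod_(i < r.+1) (k%:R / r.+1%:R : R).
  by rewrite prodr_const card_ord.
rewrite -ffactnn ffact_prod natr_prod -big_split /=.
apply: ler_prod => i _; apply/andP; split.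
  by rewrite mulr_ge0 ?divr_ge0.
have ir := ltn_ord i.
rewrite mulrAC ler_pdivrMr ?ltr0n // -!natrM ler_nat.
have -> : (k * (r.+1 - i) = k * r.+1 - k * i)%N by rewrite mulnBr.
have -> : ((k - i) * r.+1 = k * r.+1 - i * r.+1)%N by rewrite mulnBl.
apply: leq_sub2l; rewrite mulnC leq_mul2r; apply/orP; right; exact: rk.
Qed.

Lemma expR_bound (R : realType) (x : R) : 0 <= x -> x <= 2^-1 ->
  expR (- (2 * x)) <= 1 - x.
Proof.
move=> x0 x2.
have h1 : 1 + 2 * x <= expR (2 * x) := expR_ge1Dx _.
have p1 : 0 < 1 + 2 * x by rewrite ltr_pwDl // mulr_ge0.
rewrite expRN; apply: le_trans (_ : (1 + 2 * x)^-1 <= _).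
  by rewrite lef_pV2 ?posrE ?expR_gt0.
rewrite -[X in X <= _]mulr1 ler_pdivrMl //.
nra.
Qed.


Section P.
Variables (R : realType) (k : nat).

Lemma marginal (p : 'I_k -> R) (h : {set 'I_k}) :
  \sum_(x : {ffun 'I_k -> bool}) outcome_prob p x * \prod_(v in h) (x v)%:R
  = \prod_(v in h) p v.
Proof.
pose F i (b : bool) : R :=
  (if b then p i else 1 - p i) * (if i \in h then (b : nat)%:R else 1).
transitivity (\prod_i \sum_(b : bool) F i b).
  rewrite (bigA_distr_bigA F) /=; apply: eq_bigr => x _.
  by rewrite /outcome_prob /F big_split /= [in X in _ * X = _]big_mkcond.
rewrite [RHS]big_mkcond; apply: eq_bigr => i _; rewrite big_bool /F.
by case: (i \in h) => /=; lra.
Qed.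

Lemma prodc (c : R) (P : pred 'I_k) : \prod_(i | P i) c = c ^+ #|P|.
Proof. by rewrite -prodr_const. Qed.

Lemma sumc (c : R) (T : finType) (P : pred T) : \sum_(i | P i) c = c *+ #|P|.
Proof. by rewrite -sumr_const. Qed.

Lemma outcome_const (c : R) (x : {ffun 'I_k -> bool}) :
  outcome_prob (fun _ => c) x =
  c ^+ #|[set i | x i]| * (1 - c) ^+ (k - #|[set i | x i]|).
Proof.
rewrite /outcome_prob (bigID (fun i => x i)) /=.
rewrite (eq_bigr (fun=> c)) => [|i ->//].
rewrite [X in _ * X](eq_bigr (fun=> 1 - c)) => [|i /negbTE -> //].
rewrite !prodc; congr (_ ^+ _ * _ ^+ _).
  by apply: eq_card => i; rewrite inE.
have hc := cardC [set i | x i]; rewrite card_ord in hc.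
have hl : (#|[set i | x i]| <= k)%N by have := max_card [set i | x i]; rewrite card_ord.
apply: (@addnI #|[set i | x i]|); rewrite subnKC //; apply: (etrans _ hc); congr (_ + _)%N.
by apply: eq_card => i; rewrite !inE.
Qed.

Lemma prob_lb (c : R) (r : nat) (E : pred {ffun 'I_k -> bool}) :
  0 <= c <= 1 -> (forall x : {ffun 'I_k -> bool}, #|[set i | x i]| = r -> E x) ->
  ('C(k, r))%:R * (c ^+ r * (1 - c) ^+ (k - r)) <= Prob (fun _ => c) E.
Proof.
move=> /andP[c0 c1] HE; rewrite /Prob.
apply: le_trans (_ : \sum_(x : {ffun 'I_k -> bool} | #|[set i | x i]| == r)
                         outcome_prob (fun=> c) x <= _); last first.
  rewrite [X in _ <= X]big_mkcond [X in X <= _]big_mkcond /=.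
  apply: ler_sum => x _; case: eqP => [/HE -> //|_].
  case: (E x) => //; rewrite /outcome_prob; apply: prodr_ge0 => i _.
  by case: (x i); lra.
rewrite (reindex (fun A : {set 'I_k} => [ffun i => i \in A])) /=; last first.
  exists (fun x => [set i | x i]) => [x _|A _].
    by apply/setP => i; rewrite !inE ffunE.
  by apply/ffunP => i; rewrite ffunE inE.
have eA : forall A : {set 'I_k}, [set i | [ffun i => i \in A] i] = A.
  by move=> A; apply/setP => i; rewrite !inE ffunE.
rewrite (eq_bigl (fun A : {set 'I_k} => #|A| == r)); last by move=> A; rewrite eA.
rewrite (eq_bigr (fun=> c ^+ r * (1 - c) ^+ (k - r))); last first.
  by move=> A /eqP <-; rewrite outcome_const eA.
rewrite sumc -mulr_natr mulrC.
have -> : 'C(k, r) = 'C(#|'I_k|, r) by rewrite card_ord.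
by rewrite -card_draws cardsE mul1r mulr_natr.
Qed.
End P.

Lemma sumc2 (R : realType) (T : finType) (c : R) (P : pred T) : \sum_(i | P i) c = c *+ #|P|.
Proof. by rewrite -sumr_const. Qed.
Section T.
Variables (R : realType) (k q : nat) (eps muq : R).
Hypotheses (k0 : (0 < k)%N) (e0 : 0 < eps) (m0 : 0 < muq).
Definition ww (h : {set 'I_k}) : R := if #|h| == q then muq else 0.
Definition pp (i : 'I_k) : R := eps / k%:R.

Lemma term_bound (A : {set 'I_k}) : (#|A| <= q)%N ->
  \sum_(h : {set 'I_k} | A \subset h) ww h * \prod_(i in h :\: A) pp i
   <= eps ^+ (q - #|A|) * muq.
Proof.
move=> Aq; set d := (q - #|A|)%N; set c := eps / k%:R.
have -> : \sum_(h : {set 'I_k} | A \subset h) ww h * \prod_(i in h :\: A) pp i =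
          \sum_(h : {set 'I_k} | (A \subset h) && (#|h| == q)) muq * c ^+ d.
  rewrite [RHS]big_mkcondr /=; apply: eq_bigr => h Ah.
  rewrite /ww; case: eqP => [hq|_]; last by rewrite mul0r.
  rewrite prodr_const cardsD (setIidPr Ah) hq //.
rewrite sumc2.
set D := (fun h : {set 'I_k} => _).
have cD : (#|D| <= k ^ d)%N.
  apply: leq_trans (bin_le_exp k d).
  have inj : {in D &, injective (fun h => h :\: A)}.
    move=> h1 h2 /andP[A1 _] /andP[A2 _] /= e.
    by rewrite -(setID h1 A) -(setID h2 A) (setIidPr A1) (setIidPr A2) e.
  rewrite -(card_in_imset inj).
  have -> : 'C(k, d) = 'C(#|'I_k|, d) by rewrite card_ord.
  rewrite -card_draws; apply: subset_leq_card; apply/subsetP => B.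
  case/imsetP => h /andP[Ah /eqP hq] ->; rewrite inE cardsD (setIidPr Ah) hq.
  by [].
rewrite -mulr_natr.
apply: le_trans (_ : muq * c ^+ d * (k ^ d)%:R <= _).
  apply: ler_wpM2l; first by rewrite /c mulr_ge0 ?exprn_ge0 ?divr_ge0 ?(ltW m0) ?(ltW e0) ?ler0n.
  by move: cD; rewrite -(ler_nat R).
rewrite natrX -mulrA -exprMn /c divfK; last by rewrite pnatr_eq0 -lt0n.
by rewrite mulrC.
Qed.
End T.

Theorem lemma18 (R : realType) (q : nat) (eps lam muq : R) :
  (0 < q)%N -> 0 < eps -> eps <= 1 -> 0 < muq -> muq < lam ->
  exists (m : nat) (w : {set 'I_m} -> R) (p : 'I_m -> R),
    [/\ nonneg_coeffs w, has_total_power w q, is_prob_vec p &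
    [/\
     (forall j : nat, (j <= q)%N -> mu_r w p j <= eps ^+ (q - j) * muq),
     Prob p (fun x => lam <= poly_eval w x - Expect p (poly_eval w)) >=
       expR (- (2 * eps)) *
       powR (eps / (4 * q%:R * powR (lam / muq) (q%:R^-1)))
            (4 * q%:R * powR (lam / muq) (q%:R^-1))
     & Prob p (fun x => muq <= poly_eval w x - Expect p (poly_eval w)) >=
       expR (- (2 * eps)) * powR (eps / (q.+1)%:R) (q.+1)%:R ]].
Proof.
move=> q0 e0 e1 m0 ml.
set L := lam / muq.
have L1 : 1 < L by rewrite /L ltr_pdivlMr // mul1r.
set a := powR L q%:R^-1.
have a1 : 1 <= a.
  rewrite /a; apply: le_trans (_ : L `^ 0 <= _); first by rewrite powRr0.
  apply: ler_powR; [exact: ltW|].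
  by rewrite invr_ge0 ler0n.
have aq : a ^+ q = L.
  rewrite /a -powR_mulrn ?powR_ge0 // -powRrM mulVf ?pnatr_eq0 -?lt0n //.
  by rewrite powRr1 // ltW // (lt_trans ltr01).
set t := (Num.truncn (2 * a)).+1.
have ht1 : 2 * a < t%:R by apply: truncnS_gt.
have ht2 : t%:R <= 2 * a + 1.
  rewrite /t -addn1 natrD lerD2r truncn_le mulr_ge0 //.
  by apply: le_trans a1.
have t2 : (2 <= t)%N.
  by rewrite -(ler_nat R); apply: le_trans (ltW ht1); lra.
set k := (q * t)%N.
have kq : (q < k)%N.
  rewrite /k; apply: leq_trans (_ : q * 2 <= _)%N; last by rewrite leq_mul2l t2 orbT.
  by rewrite muln2 -addnn -addn1 leq_add2l.
have k0 : (0 < k)%N by apply: leq_ltn_trans kq.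
have k2 : (2 <= k)%N by apply: leq_trans kq; rewrite ltnS.
set c := eps / k%:R.
have kR : 0 < k%:R :> R by rewrite ltr0n.
have c0 : 0 <= c by rewrite divr_ge0 // ltW.
have ck : c * k%:R = eps by rewrite /c divfK // gt_eqF.
have c2 : c <= 2^-1.
  rewrite /c ler_pdivrMr //; move: k2; rewrite -(ler_nat R) => k2.
  lra.

set w := @ww R k q muq.
set p := @pp R k eps.
have wge0 : forall h, 0 <= w h by move=> h; rewrite /w /ww; case: eqP => // _; exact: ltW.
have TB := @term_bound R k q eps muq k0 e0 m0.
have Ef : Expect p (poly_eval w) <= muq.
  rewrite /Expect /poly_eval.
  under eq_bigr do rewrite mulr_sumr.
  rewrite exchange_big /=.
  under eq_bigr do (under eq_bigr do rewrite mulrCA; rewrite -mulr_sumr marginal).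
  have -> : \sum_(h : {set 'I_k}) w h * \prod_(v in h) p v =
     \sum_(h : {set 'I_k} | set0 \subset h) w h * \prod_(i in h :\: set0) p i.
    by apply: eq_big => [h|h _]; [rewrite sub0set | rewrite setD0].
  have := TB set0; rewrite cards0 subn0 => /(_ (leq0n q)).
  move=> H; apply: le_trans H _; apply: ler_piMl; first exact: ltW.
  by apply: exprn_ile1; [exact: ltW|].
have Ef0 : 0 <= Expect p (poly_eval w).
  rewrite /Expect; apply: sumr_ge0 => x _; apply: mulr_ge0.
    rewrite /outcome_prob; apply: prodr_ge0 => i _; case: (x i) => //.
    by rewrite subr_ge0 /p /pp -/c; lra.
  by rewrite /poly_eval; apply: sumr_ge0 => h _; apply: mulr_ge0 => //; apply: prodr_ge0.
have qR : 1 <= q%:R :> R by rewrite ler1n.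
have Ldef : muq * L = lam by rewrite /L mulrC divfK // gt_eqF.
have fall : forall x : {ffun 'I_k -> bool}, #|[set i | x i]| = k ->
    poly_eval w x = muq *+ 'C(k, q).
  move=> x hx.
  have xv : forall v, x v.
    have eT : [set i | x i] = setT.
      apply/eqP; rewrite eqEcard subsetT cardsT hx /= card_ord //.
    by move=> v; have := in_setT v; rewrite -eT inE.
  rewrite /poly_eval (eq_bigr (fun h => w h)) => [|h _]; last first.
    by rewrite big1 ?mulr1 // => v _; rewrite xv.
  rewrite /w /ww -big_mkcond /= sumc2.
  have -> : 'C(k, q) = 'C(#|'I_k|, q) by rewrite card_ord.
  by rewrite -card_draws cardsE.
have Cb : (L + 1) <= ('C(k, q))%:R :> R.
  apply: le_trans; last exact: (@bin_lb R k q (ltnW kq)).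
  have -> : k%:R / q%:R = t%:R :> R.
    by rewrite /k natrM mulrC mulKf // pnatr_eq0 -lt0n.
  apply: le_trans (_ : (2 * a) ^+ q <= _); last first.
    rewrite lerXn2r ?nnegrE ?ler0n ?ltW //; lra.
  rewrite exprMn aq.
  have : 2 ^+ 1 <= 2 ^+ q :> R by rewrite ler_eXn2l // ltr1n.
  rewrite expr1; nra.
exists k, w, p; split => //.
- split.
    move=> h; rewrite /w /ww; case hq: (#|h| == q); [move=> _; exact: eq_leq (eqP hq) | by rewrite eqxx].
  have : (0 < #|[set A : {set 'I_k} | #|A| == q]|)%N.
    by rewrite card_draws card_ord bin_gt0 ltnW.
  case/card_gt0P => h; rewrite inE => /eqP hq.
  by exists h; rewrite /w /ww hq eqxx gt_eqF.
- by move=> i; rewrite /p /pp -/c c0 /=; lra.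
split.
- move=> j jq; rewrite /mu_r; apply: bigmax_le.
    by apply: mulr_ge0; [apply: exprn_ge0; exact: ltW | exact: ltW].
  move=> A /eqP Aj; rewrite -Aj; apply: TB; rewrite Aj.
  exact: jq.
- apply: le_trans (_ : c ^+ k <= _).
    have kN : k%:R <= 4 * q%:R * a.
      rewrite /k natrM.
      have : q%:R * t%:R <= q%:R * (2 * a + 1) :> R by rewrite ler_wpM2l.
      nra.
    have N0 : 0 < 4 * q%:R * a by rewrite !mulr_gt0 //; lra.
    have b1 : 0 < eps / (4 * q%:R * a) <= 1.
      apply/andP; split; first by rewrite divr_gt0.
      by rewrite ler_pdivrMr // mul1r; nra.
    apply: le_trans (_ : (eps / (4 * q%:R * a)) `^ (4 * q%:R * a) <= _).
      apply: ler_piMl; first exact: powR_ge0.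
      by rewrite expR_le1; lra.
    apply: le_trans (_ : powR (eps / (4 * q%:R * a)) k%:R <= _).
      exact: (ger_powR b1).
    rewrite powR_mulrn; last by case/andP: b1 => /ltW.
    apply: lerXn2r; rewrite ?nnegrE ?c0 ?divr_ge0 ?(ltW e0) ?(ltW N0) //.
    by rewrite /c ler_pM2l // lef_pV2 ?posrE.
  have := @prob_lb R k c k (fun x => lam <= poly_eval w x - Expect p (poly_eval w)).
  rewrite binn subnn expr0 mulr1 mul1r; apply.
    by apply/andP; split => //; lra.
  move=> x /fall ->.
  rewrite -mulr_natr.
  have : muq * (L + 1) <= muq * ('C(k, q))%:R by rewrite ler_wpM2l // ltW.
  lra.
- have := @prob_lb R k c q.+1 (fun x => muq <= poly_eval w x - Expect p (poly_eval w)).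
  move=> H; apply: le_trans (H _ _); last first.
  + move=> x hx.
    set S := [set i | x i] in hx.
    have : (0 < #|S|)%N by rewrite hx.
    case/card_gt0P => a0 a0S.
    have c1 : forall y, y \in S -> #|S :\ y| = q.
      by move=> y yS; have := cardsD1 y S; rewrite yS hx add1n => -[].
    have : (0 < #|S :\ a0|)%N by rewrite c1.
    case/card_gt0P => b0; rewrite !inE => /andP[ba bS].
    set h1 := S :\ a0; set h2 := S :\ b0.
    have h12 : h2 != h1.
      apply/negP => /eqP e; have : b0 \in h1 by rewrite !inE ba bS.
      by rewrite -e !inE eqxx.
    have Fh : forall h : {set 'I_k}, h \subset S -> #|h| = q -> w h * \prod_(v in h) (x v)%:R = muq.
      move=> h hS hq; rewrite /w /ww hq eqxx big1 ?mulr1 // => v vh.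
      by have := subsetP hS v vh; rewrite inE => ->.
    have f2 : muq + muq <= poly_eval w x.
      rewrite /poly_eval (bigD1 h1) //= (bigD1 h2) //=.
      rewrite Fh ?subsetDl ?c1 // Fh ?subsetDl ?c1 //.
      rewrite addrA lerDl; apply: sumr_ge0 => h _; apply: mulr_ge0 => //.
      by apply: prodr_ge0 => v _; rewrite ler0n.
      by move: bS; rewrite /S !inE.
    apply: le_trans (_ : muq + muq - muq <= _); first by rewrite addrK.
    exact: lerB.
  + by rewrite c0 /=; apply: le_trans c2 _; rewrite invf_le1 ?ler1n ?ltr0n.
  rewrite powR_mulrn; last by rewrite divr_ge0 ?(ltW e0).
  rewrite mulrC mulrA; apply: ler_pM.
  - by apply: exprn_ge0; rewrite divr_ge0 ?ltW.
  - by rewrite expR_ge0.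
  - apply: le_trans (_ : (k%:R / q.+1%:R) ^+ q.+1 * c ^+ q.+1 <= _).
      by rewrite -exprMn mulrAC [k%:R * c]mulrC ck.
    apply: ler_wpM2r; first exact: exprn_ge0.
    exact: bin_lb.
  - have c1 : c <= 1 by apply: le_trans c2 _; rewrite invf_le1 ?ler1n ?ltr0n.
    have d0 : 0 <= 1 - c by rewrite subr_ge0.
    apply: le_trans (_ : (1 - c) ^+ k <= _); last first.
      by apply: ler_wiXn2l; [exact: d0 | rewrite gerBl | exact: leq_subr].
    apply: le_trans (_ : expR (- (2 * c)) ^+ k <= _).
      by rewrite -expRM_natr mulNr -mulrA ck.
    apply: lerXn2r; [by rewrite nnegrE expR_ge0 | by rewrite nnegrE | ].
    exact: expR_bound.
Qed.
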